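(* Let $S$ be a commutative ring, fix $q\in S$, and put $[2]=1+q$. Let $X,Y\in\mathbb{M}_2(S)$ have determinants $\delta,\delta'$, traces $t,t'$, and $q$-traces $\tau=\operatorname{tr}_q(X)$, $\tau'=\operatorname{tr}_q(Y)$, and let $\sigma=\operatorname{tr}_q(XY)$, $\sigma'=\operatorname{tr}_q(YX)$. Then $$q\cdot\det\,[X,Y]=[2]^2\,\delta'\delta-[2]\,\big(\delta\,t'\tau'+\delta'\,t\,\tau\big)+\big(\delta\,\tau'^2+\delta'\tau^2+\operatorname{tr}(XY)\,\tau'\tau-\sigma'\sigma\big).$$
   Context: $[X,Y]=XY-YX$. For $M=(m_{ij})\in\mathbb{M}_2(S)$ and $q\in S$, the $q$-trace is $\operatorname{tr}_q(M)=m_{11}+q\,m_{22}$. *)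

(* Defs.v *)
From HB Require Import structures.
From mathcomp Require Import all_boot all_order all_algebra.
Set Implicit Arguments. Unset Strict Implicit. Unset Printing Implicit Defensive.
Import GRing.Theory.
Local Open Scope ring_scope.

Definition qtr (S : comPzRingType) (q : S) (M : 'M[S]_2) : S :=
  M 0 0 + q * M 1 1.

Definition comm2 (S : comPzRingType) (X Y : 'M[S]_2) : 'M[S]_2 :=
  X *m Y - Y *m X.

(* Main.v *)
Require Import Defs.
From HB Require Import structures.
From mathcomp Require Import all_boot all_order all_algebra.
From Stdlib Require Import Ring.
Local Open Scope ring_scope.
Import GRing.Theory.

Lemma det2 (S : comPzRingType) (A : 'M[S]_2) :
  \det A = A 0 0 * A 1 1 - A 0 1 * A 1 0.
Proof.
rewrite (expand_det_row A 0) !big_ord_recl big_ord0 addr0.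
rewrite /cofactor !det_mx11 !mxE /=.
rewrite /bump /= expr0 mul1r expr1 mulN1r.
have -> : lift 0 (0 : 'I_1) = 1 :> 'I_2 by apply/val_inj.
have -> : lift 1 (0 : 'I_1) = 0 :> 'I_2 by apply/val_inj.
have -> : (ord0 : 'I_2) = 0 by apply/val_inj.
by rewrite mulrN.
Qed.

Lemma tr2 (S : comPzRingType) (A : 'M[S]_2) : \tr A = A 0 0 + A 1 1.
Proof.
rewrite /mxtrace !big_ord_recl big_ord0 addr0 /=.
have -> : lift ord0 (ord0 : 'I_1) = 1 :> 'I_2 by apply/val_inj.
by have -> : (ord0 : 'I_2) = 0 by apply/val_inj.
Qed.

Lemma mul2 (S : comPzRingType) (A B : 'M[S]_2) i j :
  (A *m B) i j = A i 0 * B 0 j + A i 1 * B 1 j.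
Proof.
rewrite mxE !big_ord_recl big_ord0 addr0 /=.
have -> : lift ord0 (ord0 : 'I_1) = 1 :> 'I_2 by apply/val_inj.
by have -> : (ord0 : 'I_2) = 0 by apply/val_inj.
Qed.

Lemma sub2 (S : comPzRingType) (A B : 'M[S]_2) i j :
  (A - B) i j = A i j - B i j.
Proof. by rewrite !mxE. Qed.

Section R.
Variables (R : Type) (zero one : R) (add mul sub : R -> R -> R) (opp : R -> R).
Hypothesis HR : ring_theory zero one add mul sub opp eq.
Add Ring Rgen : HR.
Local Notation "x + y" := (add x y).
Local Notation "x * y" := (mul x y).
Local Notation "x - y" := (sub x y).

Lemma key_gen (q a b c d e f g h : R) :
  q * ((a*e+b*g - (e*a+f*c)) * (c*f+d*h - (g*b+h*d))
       - (a*f+b*h - (e*b+f*d)) * (c*e+d*g - (g*a+h*c))) =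
  ((one+q)*(one+q)) * (e*h-f*g) * (a*d-b*c)
  - (one+q) * ((a*d-b*c) * (e+h) * (e+q*h) + (e*h-f*g)*(a+d)*(a+q*d))
  + ((a*d-b*c)*((e+q*h)*(e+q*h)) + (e*h-f*g)*((a+q*d)*(a+q*d))
     + ((a*e+b*g)+(c*f+d*h))*(e+q*h)*(a+q*d)
     - ((e*a+f*c) + q*(g*b+h*d)) * ((a*e+b*g)+q*(c*f+d*h))).
Proof. ring. Qed.
End R.

Lemma S_ring (S : comPzRingType) :
  @ring_theory S 0 1 (fun x y => x + y) (fun x y => x * y) (fun x y => x - y) (fun x => - x) eq.
Proof.
split.
- exact: add0r.
- exact: addrC.
- exact: addrA.
- exact: mul1r.
- exact: mulrC.
- exact: mulrA.
- exact: mulrDl.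
- by [].
- exact: subrr.
Qed.

Theorem theorem4p1 (S : comPzRingType) (q : S) (X Y : 'M[S]_2) :
  let two := 1 + q in
  let delta := \det X in
  let delta' := \det Y in
  let t := \tr X in
  let t' := \tr Y in
  let tau := qtr q X in
  let tau' := qtr q Y in
  let sigma := qtr q (X *m Y) in
  let sigma' := qtr q (Y *m X) in
  q * \det (comm2 X Y) =
    two ^+ 2 * delta' * delta
    - two * (delta * t' * tau' + delta' * t * tau)
    + (delta * tau' ^+ 2 + delta' * tau ^+ 2 + \tr (X *m Y) * tau' * tau
       - sigma' * sigma).
Proof.
rewrite /= /qtr /comm2 !det2 !tr2 !sub2 !mul2.
rewrite !expr2.
exact: (@key_gen _ _ _ _ _ _ _ (S_ring S) q (X 0 0) (X 0 1) (X 1 0) (X 1 1) (Y 0 0) (Y 0 1) (Y 1 0) (Y 1 1)).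
Qed.
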